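(* Let $\gamma\in\mathcal S_n$ and $\sigma=(\varepsilon,\varepsilon,\gamma;(123))$. Fix a positive integer $d$, and let $r$ be the number of cycles of $\gamma$ of length $d$. Suppose there do not exist lengths $d',d''$ of cycles of $\gamma$ (not necessarily distinct cycles) with $d\notin\{d',d''\}$ and $\operatorname{lcm}(d,d')=\operatorname{lcm}(d,d'')=\operatorname{lcm}(d',d'')$. Then $\sigma\notin\mathrm{Par}(n)$ if either <ul> <li>(i) $r=1$ and $n+d\equiv1\pmod3$, or</li> <li>(ii) $3\mid d$ and $3\nmid nr$.</li> </ul>
   Context: A Latin square of order $n$ is an $n\times n$ array with rows, columns and symbols indexed by $[n]$, each symbol occurring once in each row and each column, with triple set $O(L)$. Permutations act on the right; $\varepsilon$ is the identity; fixed points count as cycles of length $1$. A paratopism $(\alpha,\beta,\gamma;(123))$ maps $L$ to $L^\sigma$ with triple set $\{(z\gamma,x\alpha,y\beta):(x,y,z)\in O(L)\}$; it is an autoparatopism of $L$ if $L^\sigma=L$. $\mathrm{Par}(n)$ is the set of paratopisms that are autoparatopisms of at least one Latin square of order $n$. *)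

(* Defs.v *)
From mathcomp Require Import all_boot all_order all_fingroup.
Set Implicit Arguments. Unset Strict Implicit. Unset Printing Implicit Defensive.

(* Symbols, rows and columns are indexed by 'I_n (i.e. [n] shifted to 0..n-1). *)
Definition is_latin (n : nat) (L : 'I_n -> 'I_n -> 'I_n) : Prop :=
  (forall x, injective (L x)) /\ (forall y, injective (fun x => L x y)).

Definition triples (n : nat) (L : 'I_n -> 'I_n -> 'I_n) : {set 'I_n * 'I_n * 'I_n} :=
  [set t : 'I_n * 'I_n * 'I_n | t.2 == L t.1.1 t.1.2].

(* Triple set of L^sigma for sigma = (alpha, beta, gamma; (123)):
   {(z gamma, x alpha, y beta) : (x, y, z) in O(L)}; permutations act on the right,
   so x alpha is written alpha x. *)
Definition par123_image (n : nat) (alpha beta gamma : {perm 'I_n})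
    (O : {set 'I_n * 'I_n * 'I_n}) : {set 'I_n * 'I_n * 'I_n} :=
  [set (gamma t.2, alpha t.1.1, beta t.1.2) | t in O].

Definition is_autoparatopism123 (n : nat) (alpha beta gamma : {perm 'I_n})
    (L : 'I_n -> 'I_n -> 'I_n) : Prop :=
  par123_image alpha beta gamma (triples L) = triples L.

Definition in_Par123 (n : nat) (alpha beta gamma : {perm 'I_n}) : Prop :=
  exists L : 'I_n -> 'I_n -> 'I_n, is_latin L /\ is_autoparatopism123 alpha beta gamma L.

(* Cycles of a permutation (fixed points are cycles of length 1). *)
Definition cycle_length_of (n : nat) (g : {perm 'I_n}) (l : nat) : Prop :=
  exists2 c, c \in porbits g & #|c| = l.

Definition num_cycles_of_length (n : nat) (g : {perm 'I_n}) (d : nat) : nat :=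
  #|[set c in porbits g | #|c| == d]|.

(* Main.v *)
From mathcomp Require Import all_boot all_order all_fingroup.
From mathcomp Require Import zify.
Require Import Defs.
Set Implicit Arguments. Unset Strict Implicit. Unset Printing Implicit Defensive.

Lemma iter_mul (T : Type) (f : T -> T) x c m :
  iter c f x = x -> iter (m * c) f x = x.
Proof. by move=> H; elim: m => [|m IH] //; rewrite mulSn iterD IH H. Qed.

Lemma iter_dvd (T : eqType) (f : T -> T) x c :
  0 < c -> iter c f x = x -> uniq (traject f x c) ->
  forall k, (iter k f x == x) = (c %| k).
Proof.
move=> c0 Hc U k.
have -> : iter k f x = iter (k %% c) f x.
  by rewrite {1}(divn_eq k c) addnC iterD iter_mul.
apply/idP/idP; last by move=> /dvdnP[q ->]; rewrite modnMl.
move=> /eqP E; rewrite /dvdn; apply/eqP.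
have := nth_uniq x (i:=k %% c) (j:=0) _ _ U.
rewrite size_traject ltn_mod c0 => /(_ isT isT).
by rewrite !nth_traject ?ltn_mod // E /= eqxx => /esym/eqP.
Qed.

Definition cl n (g : {perm 'I_n}) x := #|porbit g x|.

Lemma cl_iter n (g : {perm 'I_n}) x k : (iter k g x == x) = (cl g x %| k).
Proof.
apply: iter_dvd; first by rewrite lt0n card_porbit_neq0.
  exact: iter_porbit.
exact: uniq_traject_porbit.
Qed.

Lemma cl_iterP n (g : {perm 'I_n}) x k : cl g (iter k g x) = cl g x.
Proof. by rewrite /cl -permX porbit_perm. Qed.

Lemma cl_g n (g : {perm 'I_n}) x : cl g (g x) = cl g x.
Proof. exact: (cl_iterP g x 1). Qed.

Lemma autot n (g : {perm 'I_n}) L : is_latin L ->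
  (forall x y, L (g (L x y)) x = y) ->
  forall x y, L (g x) (g y) = g (L x y).
Proof.
move=> _ H x y.
have h1 := H (g (L x y)) x; rewrite (H x y) in h1.
by have := H (g y) (g (L x y)); rewrite h1.
Qed.

Lemma autot_iter n (g : {perm 'I_n}) L : is_latin L ->
  (forall x y, L (g (L x y)) x = y) ->
  forall k x y, L (iter k g x) (iter k g y) = iter k g (L x y).
Proof.
move=> HL H; elim=> [//|k IH] x y /=.
by rewrite (autot HL H) IH.
Qed.

Lemma lcm_eq a b c : c %| lcmn a b -> b %| lcmn a c -> a %| lcmn b c ->
  lcmn a b = lcmn a c /\ lcmn a c = lcmn b c.
Proof.
move=> h1 h2 h3; split; apply/eqP; rewrite eqn_dvd !dvdn_lcm ?dvdn_lcml ?dvdn_lcmr ?h1 ?h2 ?h3 //.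
Qed.

Lemma triple_div n (g : {perm 'I_n}) L : is_latin L ->
  (forall x y, L (g (L x y)) x = y) -> forall x y,
  [/\ cl g (L x y) %| lcmn (cl g x) (cl g y),
      cl g y %| lcmn (cl g x) (cl g (L x y)) &
      cl g x %| lcmn (cl g y) (cl g (L x y))].
Proof.
move=> HL H x y; have AI := autot_iter HL H.
have fix1 z a b : cl g z %| lcmn a b -> a = cl g z \/ b = cl g z -> iter (lcmn a b) g z = z.
  by move=> hd _; apply/eqP; rewrite cl_iter.
split.
- rewrite -cl_iter -AI.
  have/eqP-> : iter (lcmn (cl g x) (cl g y)) g x == x by rewrite cl_iter dvdn_lcml.
  by have/eqP-> : iter (lcmn (cl g x) (cl g y)) g y == y by rewrite cl_iter dvdn_lcmr.
- rewrite -cl_iter; apply/eqP; apply: (HL.1 x).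
  set k := lcmn _ _.
  have/eqP {1}<- : iter k g x == x by rewrite cl_iter dvdn_lcml.
  rewrite AI; apply/eqP; rewrite cl_iter dvdn_lcmr //.
- rewrite -cl_iter; apply/eqP; apply: (HL.2 y) => /=.
  set k := lcmn _ _.
  have/eqP {1}<- : iter k g y == y by rewrite cl_iter dvdn_lcml.
  rewrite AI; apply/eqP; rewrite cl_iter dvdn_lcmr //.
Qed.

Lemma cl_len n (g : {perm 'I_n}) x : cycle_length_of g (cl g x).
Proof. by exists (porbit g x) => //; rewrite /porbits imset_f. Qed.

Lemma N1 n (g : {perm 'I_n}) L d : is_latin L ->
  (forall x y, L (g (L x y)) x = y) ->
  ~ (exists d' d'' : nat,
        [/\ cycle_length_of g d', cycle_length_of g d'',
            d <> d', d <> d'' &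
            lcmn d d' = lcmn d d'' /\ lcmn d d'' = lcmn d' d'']) ->
  forall x y, cl g x = d -> cl g y != d -> cl g (L x y) = d.
Proof.
move=> HL H NoD x y hx hy; apply/eqP; apply/negPn/negP => hz.
apply: NoD; exists (cl g y), (cl g (L x y)); split; try exact: cl_len.
- by move=> e; rewrite e eqxx in hy.
- by move=> e; rewrite e eqxx in hz.
- have [h1 h2 h3] := triple_div HL H x y; rewrite -hx; exact: lcm_eq.
Qed.

Definition Dset n (g : {perm 'I_n}) d := [set x | cl g x == d].
Definition Sset n (g : {perm 'I_n}) d (L : 'I_n -> 'I_n -> 'I_n) :=
  [set p : 'I_n * 'I_n | [&& p.1 \in Dset g d, p.2 \in Dset g d & L p.1 p.2 \in Dset g d]].

Lemma countS n (g : {perm 'I_n}) L d : is_latin L ->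
  (forall x y, L (g (L x y)) x = y) ->
  ~ (exists d' d'' : nat,
        [/\ cycle_length_of g d', cycle_length_of g d'',
            d <> d', d <> d'' &
            lcmn d d' = lcmn d d'' /\ lcmn d d'' = lcmn d' d'']) ->
  #|Sset g d L| + #|Dset g d| * (n - #|Dset g d|) = #|Dset g d| * #|Dset g d|.
Proof.
move=> HL H NoD; set D := Dset g d; set S := Sset g d L.
have E1 : #|S| = \sum_x \sum_(y | (x, y) \in S) 1.
  rewrite -sum1_card; symmetry; under eq_bigr do rewrite big_mkcond /=.
  rewrite pair_big /= [RHS]big_mkcond /=; apply: eq_bigr => -[x y] _ //.
have E2 x : x \in D -> \sum_(y | (x, y) \in S) 1 + (n - #|D|) = #|D|.
  move=> xD; rewrite sum1_card.
  have -> : n - #|D| = #|~: D| by have hC := cardsC D; rewrite card_ord in hC; lia.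
  rewrite -(card_preimset D (HL.1 x)) -(cardsID D (L x @^-1: D)); congr (_ + _).
    apply: eq_card => y; rewrite -[y \in _]/((x,y) \in Sset g d L) !inE /=.
    by move: xD; rewrite /D /Dset inE => ->; case: (cl g y == d); case: (cl g (L x y) == d).
  apply: eq_card => y.
  rewrite !inE; case hy: (cl g y == d) => //=.
  apply/esym/eqP; apply: (N1 HL H NoD); first by move: xD; rewrite inE => /eqP.
  by rewrite hy.
have E3 x : x \notin D -> \sum_(y | (x, y) \in S) 1 = 0.
  move=> xD; apply: big_pred0 => y; rewrite -[_ \in _]/((x,y) \in Sset g d L) inE /=.
  by move: xD; rewrite /D inE => /negbTE ->.
rewrite E1 (bigID (fun x => x \in D)) /= [X in _ + X + _]big1 ?addn0; last by move=> x /E3.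
rewrite -sum_nat_const -big_split /= -[X in _ = X]sum_nat_const; apply: eq_bigr => x; exact: E2.
Qed.

Lemma cardD n (g : {perm 'I_n}) d : 0 < d ->
  #|Dset g d| = num_cycles_of_length g d * d.
Proof.
move=> d0; rewrite /num_cycles_of_length; apply: card_uniform_partition.
  by move=> c; rewrite inE => /andP[_ /eqP].
apply/and3P; split.
- apply/eqP/setP => x; rewrite inE; apply/bigcupP/idP.
    move=> [c]; rewrite inE => /andP[/imsetP[y _ ->] /eqP hc] xy.
    have : porbit g x == porbit g y by rewrite eq_porbit_mem.
    by move/eqP; rewrite /cl => ->; rewrite hc.
  move=> hx; exists (porbit g x); last exact: porbit_id.
  by rewrite inE /porbits imset_f.
- apply/trivIsetP => A B; rewrite !inE => /andP[/imsetP[a _ ->] _] /andP[/imsetP[b _ ->] _] neq.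
  rewrite -setI_eq0; apply/eqP/setP => z; rewrite !inE.
  apply/negP => /andP[za zb]; move/negP: neq; apply.
  have /eqP <- : porbit g z == porbit g a by rewrite eq_porbit_mem.
  by have /eqP <- : porbit g z == porbit g b by rewrite eq_porbit_mem.
- rewrite inE negb_and; apply/orP; right; rewrite cards0 eq_sym -lt0n //.
Qed.

Definition tau n (g : {perm 'I_n}) (L : 'I_n -> 'I_n -> 'I_n) (p : 'I_n * 'I_n) :=
  (g (L p.1 p.2), p.1).

Lemma tau_inj n (g : {perm 'I_n}) L : is_latin L -> injective (tau g L).
Proof.
move=> HL [x y] [x' y'] [] /perm_inj /= E Ex; subst x'; congr (_, _).
exact: (HL.1 x _ _ E).
Qed.

Lemma tau3 n (g : {perm 'I_n}) L : (forall x y, L (g (L x y)) x = y) ->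
  forall k x y, iter (3 * k) (tau g L) (x, y) = (iter k g x, iter k g y).
Proof.
move=> H; elim=> [//|k IH] x y.
by rewrite mulnS iterD IH /= /tau /= !H.
Qed.

Lemma ord_iter n (g : {perm 'I_n}) L : is_latin L -> forall p k,
  (iter k (tau g L) p == p) = (fingraph.order (tau g L) p %| k).
Proof.
move=> HL p; apply: iter_dvd; first exact: fingraph.order_gt0.
  exact: (iter_order (tau_inj (g:=g) HL)).
exact: orbit_uniq.
Qed.

Lemma ord_tau n (g : {perm 'I_n}) L : is_latin L -> forall p,
  fingraph.order (tau g L) (tau g L p) = fingraph.order (tau g L) p.
Proof.
move=> HL p; apply: eq_card => q.
have E := same_fconnect1 (tau_inj (g:=g) HL) p q. by rewrite /in_mem /= E.
Qed.

Lemma S_tau n (g : {perm 'I_n}) L d : (forall x y, L (g (L x y)) x = y) ->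
  forall p, (tau g L p \in Sset g d L) = (p \in Sset g d L).
Proof.
move=> H [x y]; rewrite /Sset !inE /tau /= H cl_g.
by case: (cl g x == d); case: (cl g y == d); case: (cl g (L x y) == d).
Qed.

Lemma ord_S n (g : {perm 'I_n}) L d : is_latin L ->
  (forall x y, L (g (L x y)) x = y) -> 0 < d ->
  forall p, p \in Sset g d L ->
  [/\ fingraph.order (tau g L) p = d \/ fingraph.order (tau g L) p = 3 * d,
      3 %| d -> fingraph.order (tau g L) p = 3 * d &
      ~~ (3 %| d) -> fingraph.order (tau g L) p = d ->
         p.2 = iter ((d * d) %/ 3) g p.1].
Proof.
move=> HL H d0 [x y]; rewrite /Sset !inE /= => /and3P[hx hy hz].
have oi := ord_iter g HL (x,y).
set o := fingraph.order (tau g L) (x, y) in oi *.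
have t3 := tau3 H.
have hx' : iter d g x = x by apply/eqP; rewrite cl_iter (eqP hx).
have hy' : iter d g y = y by apply/eqP; rewrite cl_iter (eqP hy).
have o3d : o %| 3 * d by rewrite -oi t3 hx' hy'.
have fix3 t : o %| 3 * t -> d %| t.
  by rewrite -oi t3 => /eqP [] /eqP; rewrite cl_iter (eqP hx).
have dvo : d %| o by apply: fix3; rewrite dvdn_mull.
have [m om] : exists m, o = m * d by exists (o %/ d); rewrite divnK.
have m3 : m %| 3.
 by move: o3d; rewrite om dvdn_pmul2r.
have ho : o = d \/ o = 3 * d.
  rewrite om; move: m3; case: m {om} => [|[|[|[|m]]]] //.
  - by rewrite mul1n; left.
  - by right.
split => //.
- move=> d3; case: ho => // od; exfalso.
  have : d %| d %/ 3 by apply: fix3; rewrite mulnC divnK // od.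
  have dpos : 0 < d %/ 3 by rewrite divn_gt0 // dvdn_leq.
  move=> /(dvdn_leq dpos); rewrite leqNgt ltn_Pdiv //.
- move=> nd3 od.
  have m1 : (d * d) %% 3 = 1.
    rewrite -modnMm; move: nd3; rewrite /dvdn.
    by case: (d %% 3) (ltn_pmod d (isT : 0 < 3)) => [|[|[|k]]].
  have : iter (d * d) (tau g L) (x, y) == (x, y) by rewrite oi od dvdn_mull.
  rewrite {1}(divn_eq (d * d) 3) m1 addn1 iterS mulnC t3 /tau /=.
  by case/eqP => _ <-.
Qed.
Lemma t1 eF eG n d : 0 < d -> d <= n -> eF <= 1 -> (n + d) %% 3 = 1 ->
  eF * d + eG * (3 * d) + d * (n - d) = d * d -> False.
Proof.
move=> d0 dn e1 m E.
have E' : (eF + 3 * eG + (n - d)) * d = d * d.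
  rewrite -E; move: (n - d) => k; nia.
move/eqP: E'; rewrite eqn_pmul2r // => /eqP E2.
lia.
Qed.
Lemma t2 eG n d r : 0 < d -> r * d <= n -> 3 %| d -> ~~ (3 %| n * r) ->
  eG * (3 * d) + r * d * (n - r * d) = r * d * (r * d) -> False.
Proof.
move=> d0 dn d3 nd E.
have E' : (eG * 3 + r * (n - r * d)) * d = (r * (r * d)) * d.
  move: E; move: (n - r * d) => k; nia.
move/eqP: E'; rewrite eqn_pmul2r // => /eqP E2.
move: d3 => /dvdnP[k dk]; subst d.
have h1 : r * (r * (k * 3)) <= r * n by rewrite leq_mul2l dn orbT.
move: nd E2 h1; rewrite mulnC mulnBr.
have -> : r * (r * (k * 3)) = (r * r * k) * 3 by nia.
move: (r * n) (r * r * k) => A C; lia.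
Qed.

Theorem theorem5p1 (n : nat) (gamma : {perm 'I_n}) (d : nat) :
  0 < d ->
  ~ (exists d' d'' : nat,
        [/\ cycle_length_of gamma d', cycle_length_of gamma d'',
            d <> d', d <> d'' &
            lcmn d d' = lcmn d d'' /\ lcmn d d'' = lcmn d' d'']) ->
  (num_cycles_of_length gamma d = 1 /\ (n + d) %% 3 = 1
   \/ 3 %| d /\ ~~ (3 %| n * num_cycles_of_length gamma d)) ->
  ~ in_Par123 1 1 gamma.
Proof.
move=> d0 NoD hcase [L [HL aut]].
have H : forall x y, L (gamma (L x y)) x = y.
  move=> x y.
  have : (gamma (L x y), x, y) \in par123_image 1 1 gamma (triples L).
    by apply/imsetP; exists (x, y, L x y); rewrite ?inE //= !perm1.
  by rewrite aut inE /= => /eqP.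
have injt := tau_inj (g:=gamma) HL.
set S := Sset gamma d L.
set D := Dset gamma d.
set A := [set p | fingraph.order (tau gamma L) p == d].
have hS := cardsID A S.
have clF : fclosed (tau gamma L) (S :&: A).
  move=> p q /eqP <-; by rewrite /S ?in_setI ?in_setD S_tau // /A !inE ord_tau.
have clG : fclosed (tau gamma L) (S :\: A).
  move=> p q /eqP <-; by rewrite /S ?in_setI ?in_setD S_tau // /A !inE ord_tau.
have sF : S :&: A \subset order_set (tau gamma L) d.
  by apply/subsetP => p; rewrite in_setI /A !inE => /andP[_ ->].
have sG : S :\: A \subset order_set (tau gamma L) (3 * d).
  apply/subsetP => p; rewrite in_setD => /andP[hA hp]; move: hA; rewrite /A inE => hA; rewrite inE.
  have [[od|od] _ _] := ord_S HL H d0 hp; last by rewrite od.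
  by rewrite od eqxx in hA.
have eF := fcard_order_set injt sF clF.
have eG := fcard_order_set injt sG clG.
have hC := countS HL H NoD.
have hD := cardD gamma d0.
have hDn : #|D| <= n by rewrite -[X in _ <= X](card_ord n) max_card.
have F0 : 3 %| d -> #|S :&: A| = 0.
  move=> d3; apply/eqP; rewrite cards_eq0; apply/eqP/setP => p; rewrite in_setI in_set0.
  apply/negP => /andP[hp]; rewrite /A inE => /eqP hA.
  have [_ h _] := ord_S HL H d0 hp; move: (h d3); rewrite hA => E.
  lia.
rewrite -/S -/D in hC hD hDn.
case: hcase => [[r1 m3] | [d3 nd3]].
- rewrite r1 mul1n in hD.
  have Fd : #|S :&: A| <= d.
    have [d3|nd3] := boolP (3 %| d); first by rewrite F0.
    rewrite -hD.
    apply: (leq_trans _ (leq_imset_card (fun x => (x, iter ((d * d) %/ 3) gamma x)) D)).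
    apply: subset_leq_card; apply/subsetP => -[x y]; rewrite in_setI => /andP[hp]; rewrite /A inE => /eqP hA.
    have [_ _ h] := ord_S HL H d0 hp.
    have /= -> := h nd3 hA.
    apply/imsetP; exists x => //.
    by move: hp; rewrite /S /Sset inE => /and3P[].
  have e1 : fcard (tau gamma L) (S :&: A) <= 1.
    by rewrite -(leq_pmul2r d0) mul1n eF.
  rewrite -eF -eG in hS.
  rewrite hD -hS in hC.
  rewrite hD in hDn.
  exact: (t1 d0 hDn e1 m3 hC).
- rewrite -eG F0 // add0n in hS.
  rewrite hD -hS in hC.
  rewrite hD in hDn.
  exact: (t2 d0 hDn d3 nd3 hC).
Qed.
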